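(* No infinite betweenness algebra is a MIA; that is, if $\langle A,f,g\rangle$ is a betweenness algebra with $A$ infinite, then $Q_f\neq S_g$.
   Context: A PS-algebra is $\langle A,f,g\rangle$ where $A$ is a Boolean algebra with at least two elements (operations $+,\cdot,-,0,1$) and $f,g\colon A^2\to A$ satisfy: $f(x,y)=0$ whenever $x=0$ or $y=0$; $f$ is additive in each argument; $g(x,y)=1$ whenever $x=0$ or $y=0$; $g$ is co-additive in each argument ($g(x+x',y)=g(x,y)\cdot g(x',y)$, $g(x,y+y')=g(x,y)\cdot g(x,y')$). A betweenness algebra is a PS-algebra satisfying for all $x,y,z$: (ABT0) $x\leq f(x,x)$; (ABT1$_f$) $f(x,y)\leq f(y,x)$; (ABT1$_g$) $g(x,y)\leq g(y,x)$; (ABT2) $y\cdot f(x,z)\leq f(x\cdot f(x,y),z)$; (ABT3) $f(x,g(x,-y)\cdot y)\leq y$; (wMIA) if $x\neq0$ and $y\neq0$ then $g(x,y)\leq f(x,y)$. On the set of ultrafilters of $A$ define $Q_f(\mathcal U_1,\mathcal U_2,\mathcal U_3)\iff f[\mathcal U_1\times\mathcal U_3]\subseteq\mathcal U_2$ and $S_g(\mathcal U_1,\mathcal U_2,\mathcal U_3)\iff g[\mathcal U_1\times\mathcal U_3]\cap\mathcal U_2\neq\emptyset$. A PS-algebra is a MIA (mixed algebra) if $Q_f=S_g$. *)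

(* Defs.v *)
(* A Boolean algebra is a complemented distributive lattice
   with top and bottom: MathComp's ctbDistrLatticeType. *)
From mathcomp Require Import all_boot all_order.
Import Order.Theory.
Local Open Scope order_scope.

Section BA.
Context {d : Order.disp_t} {A : ctbDistrLatticeType d}.

Definition PS_algebra (f g : A -> A -> A) : Prop :=
  (forall x y, x = \bot \/ y = \bot -> f x y = \bot) /\
  (forall x x' y, f (x `|` x') y = f x y `|` f x' y) /\
  (forall x y y', f x (y `|` y') = f x y `|` f x y') /\
  (forall x y, x = \bot \/ y = \bot -> g x y = \top) /\
  (forall x x' y, g (x `|` x') y = g x y `&` g x' y) /\
  (forall x y y', g x (y `|` y') = g x y `&` g x y').

Definition betweenness_algebra (f g : A -> A -> A) : Prop :=
  PS_algebra f g /\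
  (forall x, x <= f x x) /\
  (forall x y, f x y <= f y x) /\
  (forall x y, g x y <= g y x) /\
  (forall x y z, y `&` f x z <= f (x `&` f x y) z) /\
  (forall x y, f x (g x (~` y) `&` y) <= y) /\
  (forall x y, x != \bot -> y != \bot -> g x y <= f x y).

Definition ultrafilter (U : A -> Prop) : Prop :=
  [/\ (forall x y, U x -> x <= y -> U y),
      (forall x y, U x -> U y -> U (x `&` y)),
      ~ U \bot
    & (forall x, U x \/ U (~` x))].

Definition Q_rel (f : A -> A -> A) (U1 U2 U3 : A -> Prop) : Prop :=
  forall a b, U1 a -> U3 b -> U2 (f a b).

Definition S_rel (g : A -> A -> A) (U1 U2 U3 : A -> Prop) : Prop :=
  exists a b, [/\ U1 a, U3 b & U2 (g a b)].

Definition is_MIA (f g : A -> A -> A) : Prop :=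
  forall U1 U2 U3, ultrafilter U1 -> ultrafilter U2 -> ultrafilter U3 ->
    (Q_rel f U1 U2 U3 <-> S_rel g U1 U2 U3).

End BA.

Definition infinite_type (T : eqType) : Prop :=
  forall s : seq T, exists x : T, x \notin s.

(* Main.v *)
Require Import Defs.
From mathcomp Require Import all_boot all_order.
From mathcomp Require classical_sets.
From Stdlib Require Import Classical.
Import Order.Theory.
Local Open Scope order_scope.

Section Aux.
Context {d : Order.disp_t} {A : ctbDistrLatticeType d}.

Definition Jn (s : seq A) : A := foldr Order.join \bot s.
Definition atom (a : A) := a != \bot /\ forall y, y <= a -> y = \bot \/ y = a.

Lemma fin_below (s : seq A) : (forall a, a \in s -> atom a) ->
  exists L : seq A, forall x, x <= Jn s -> x \in L.
Proof.
elim: s => [|a s IH] Hs.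
  by exists [:: \bot] => x /=; rewrite lex0 inE.
have [L HL] : exists L : seq A, forall x, x <= Jn s -> x \in L.
  by apply: IH => b bs; apply: Hs; rewrite inE bs orbT.
exists (L ++ map (Order.join a) L) => x /= Hx.
have Ex : x = (x `&` a) `|` (x `&` Jn s) by rewrite -meetUr meet_l.
have HJ : x `&` Jn s \in L by apply: HL; exact: leIr.
have [_ Ha] := Hs a (mem_head _ _).
rewrite mem_cat; case: (Ha (x `&` a) (leIr _ _)) => E; rewrite E in Ex.
  by rewrite Ex join0x HJ.
by apply/orP; right; rewrite Ex; apply: map_f.
Qed.

Definition Filt (X : A -> Prop) :=
  [/\ (forall x y, X x -> x <= y -> X y), (forall x y, X x -> X y -> X (x `&` y)),
      ~ X \bot & forall y, (exists s, (forall a, a \in s -> atom a) /\ ~` y <= Jn s) -> X y].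

Lemma exists_free_uf : infinite_type A ->
  exists U : A -> Prop, ultrafilter U /\ forall a, atom a -> ~ U a.
Proof.
move=> inf.
pose F0 := fun y : A => exists s, (forall a, a \in s -> atom a) /\ ~` y <= Jn s.
have F0F : Filt F0.
  split.
  - move=> x y [s [Hs Hx]] xy; exists s; split => //.
    by apply: le_trans Hx; rewrite leC.
  - move=> x y [s [Hs Hx]] [t [Ht Hy]]; exists (s ++ t); split.
      by move=> a; rewrite mem_cat => /orP[]; [apply: Hs|apply: Ht].
    have JE : Jn (s ++ t) = Jn s `|` Jn t.
      by rewrite /Jn foldr_cat; elim: s {Hs Hx} => [|b s IH] /=; rewrite ?join0x // IH joinA.
    by rewrite JE complI leU2.
  - move=> [s [Hs H]]; have [L HL] := fin_below _ Hs.
    have [x xL] := inf L; suff: x \in L by rewrite (negbTE xL). apply: HL.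
    by apply: le_trans H; rewrite compl0 lex1.
  - by [].
pose P := fun X : A -> Prop => (forall a, ~ X a) \/ Filt X.
have PF X a : P X -> X a -> Filt X by case => // H /H.
have [M [PM maxM]] : exists M : A -> Prop, P M /\
   (forall B, classical_sets.proper M B -> ~ P B).
  apply: (@classical_sets.Zorn_bigcup A P) => F FP tot.
  case: (classic (exists i a, F i /\ i a)) => [[i0 [a0 [Fi0 i0a0]]]|Hn]; last first.
    by left => a [i Fi ia]; apply: Hn; exists i, a.
  have Fi0F := PF _ _ (FP _ Fi0) i0a0.
  right; split.
  - move=> x y [i Fi ix] xy; exists i => //.
    by have [H _ _ _] := PF _ _ (FP _ Fi) ix; apply: H xy.
  - move=> x y [i Fi ix] [j Fj jy].
    case: (tot _ _ Fi Fj) => sub.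
      exists j => //; have [_ H _ _] := PF _ _ (FP _ Fj) jy; apply: H => //; exact: sub.
    exists i => //; have [_ H _ _] := PF _ _ (FP _ Fi) ix; apply: H => //; exact: sub.
  - by move=> [i Fi ib]; have [_ _ H _] := PF _ _ (FP _ Fi) ib.
  - by move=> y Hy; exists i0 => //; case: Fi0F => _ _ _; apply.
have MF : Filt M.
  case: PM => // Hn; exfalso; apply: (maxM F0) => //; last by right.
  split; first by move=> a /Hn.
  move=> H; apply: (Hn \top); apply: H.
  by exists [::]; split => //=; rewrite compl1.
have [Mup Mmeet Mbot MF0] := MF.
exists M; split; last first.
  move=> a [an Ha] Ma; apply: Mbot.
  have : M (~` a) by apply: MF0; exists [:: a]; split; [move=> b; rewrite inE => /eqP ->|rewrite complK /= joinx0].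
  by move=> /(Mmeet _ _ Ma); rewrite meetxC.
split => //.
move=> x; case: (classic (M x)) => [|Mx]; first by left.
case: (classic (M (~` x))) => [|Mcx]; first by right.
exfalso; apply: (maxM (fun y => exists2 u, M u & u `&` x <= y)).
  split; first by move=> y My; exists y => //; exact: leIl.
  move=> H; apply: Mx; apply: H; exists \top; last by rewrite meet1x.
  by apply: MF0; exists [::]; split => //=; rewrite compl1.
right; split.
- by move=> y z [u Mu H] yz; exists u => //; apply: le_trans yz.
- move=> y z [u Mu Hu] [v Mv Hv]; exists (u `&` v); first exact: Mmeet.
  rewrite lexI; apply/andP; split.
    by apply: le_trans Hu; apply: leI2 => //; exact: leIl.
  by apply: le_trans Hv; apply: leI2 => //; exact: leIr.
- move=> [u Mu]; rewrite lex0 => /eqP H; apply: Mcx; apply: (Mup _ _ Mu).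
  by rewrite -disj_leC H.
- by move=> y Hy; exists y; [exact: MF0|exact: leIl].
Qed.

End Aux.

Theorem theorem49 (d : Order.disp_t) (A : ctbDistrLatticeType d)
    (f g : A -> A -> A) :
  (\bot : A) != \top ->
  infinite_type A ->
  betweenness_algebra f g ->
  ~ is_MIA f g.
Proof.
move=> _ inf [[f0 [fl [fr [g0 [gl gr]]]]] [abt0 [_ [_ [_ [abt3 wmia]]]]]] mia.
have [U [UU Unoat]] := exists_free_uf inf.
have [Uup Umeet Ubot Uult] := UU.
have fmono x x' y y' : x <= x' -> y <= y' -> f x y <= f x' y'.
  move=> /join_idPr xx /join_idPr yy; apply: (@le_trans _ _ (f x' y)).
    by rewrite -xx fl leUl.
  by rewrite -yy fr leUl.
have ganti x x' y y' : x <= x' -> y <= y' -> g x' y' <= g x y.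
  move=> /join_idPr xx /join_idPr yy; apply: (@le_trans _ _ (g x y')).
    by rewrite -xx gl leIl.
  by rewrite -yy gr leIl.
have Q : Q_rel f U U U.
  move=> a b Ua Ub; apply: (Uup (a `&` b)); first exact: Umeet.
  by apply: le_trans (abt0 _) _; apply: fmono; [exact: leIl|exact: leIr].
have [a [b [Ua Ub Ug]]] := (mia _ _ _ UU UU UU).1 Q.
set c := a `&` b.
have Ugc : U (g c c).
  by apply: (Uup _ _ Ug); apply: ganti; [exact: leIl|exact: leIr].
set e := c `&` g c c.
have Ue : U e by apply: (Umeet) => //; exact: (Umeet).
have ege : e <= g e e.
  by apply: le_trans (leIr _ _) _; apply: ganti; exact: leIl.
apply: (Unoat e) => //; split.
  by apply/negP => /eqP eb; apply: Ubot; rewrite -eb.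
move=> p pe; case: (boolP (p == \bot)) => [/eqP|pn]; first by left.
right; set q := e `&` ~` p.
case: (boolP (q == \bot)) => [qb|qn].
  apply/eqP; rewrite eq_le pe /=.
  by move: qb; rewrite disj_leC complK.
suff: p <= \bot by rewrite lex0 (negbTE pn).
have h1 : f p q <= ~` p.
  apply: le_trans (abt3 p (~` p)); apply: fmono => //.
  rewrite complK lexI leIr andbT /q.
  apply: le_trans (leIl _ _) _; apply: (le_trans ege); exact: ganti.
have h2 : p <= f p q.
  apply: le_trans (wmia _ _ pn qn); apply: (le_trans pe); apply: (le_trans ege).
  by apply: ganti => //; exact: leIl.
have := le_trans h2 h1; rewrite -disj_leC meetxx => /eqP ->; exact: lexx.
Qed.
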